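(* Let $\mathcal G$ be a rooted digraph, $T>0$, $r\in(0,1)^N$, $i^*$ a root of $\mathcal G$, and $\xi=\phi_1\phi_2\cdots\in\Xi$ such that $\phi_{k_0}\phi_{k_0+1}\cdots\phi_{k_0+q^*\ell^*-1}=\zeta$ for some $k_0\in\mathbb Z_{\ge1}$, where $\zeta$ is the synchronization string w.r.t. $i^*$. Let $x=(\tau,\lambda)$ be a maximal solution of $\mathcal H_\xi$ with $\lambda(0,0)=0$ and $\tau(0,0)\in[0,1]^N$. For $q=0,\dots,q^*$ let $k_q:=k_0+q\ell^*$ and $t_q:=\min\{t\ge0:(t,k_q)\in\operatorname{dom}(x)\}$. Then for each $q=0,\dots,q^*-1$ there exists $(t'_q,k'_q)\in\operatorname{dom}(x)$ with $(t_q,k_q)\preceq(t'_q,k'_q)\preceq(t_{q+1},k_{q+1}-1)$ such that $\tau(t'_q,k'_q)\in\mathcal A_{q+1}(i^* )$; moreover $\tau(t,k)\in\mathcal A_{q+1}(i^* )$ for all $(t,k)\in\operatorname{dom}(x)$ with $(t,k)\succeq(t'_q,k'_q)$.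
   Context: $\mathcal G=(\mathcal V,\mathcal E)$ is a simple digraph on $\mathcal V=\{1,\dots,N\}$; $(i,j)\in\mathcal E$ means $j$ is an out-neighbor of $i$; $\mathcal E_i^-$ is the set of out-edges of $i$. A path is a sequence of pairwise distinct vertices with consecutive pairs in $\mathcal E$, its length the number of edges. A root is a vertex from which every other vertex is reachable; rooted means a root exists. For the root $i^*$, $\mathcal V_q(i^* )$ is the set of vertices at shortest-path distance $q$ from $i^*$, $q^*$ the maximal distance, $\mathcal U_q(i^* )=\bigcup_{l=0}^q\mathcal V_l(i^* )$. $\underline r=\min_ir_i$, $\ell^*:=N(\lfloor1/\underline r\rfloor+1)$. A subgraph $(\mathcal V,\mathcal E')$, $\mathcal E'\subseteq\mathcal E$, is feasible if for every $i$ either $\mathcal E_i^-\subseteq\mathcal E'$ or $\mathcal E_i^-\cap\mathcal E'=\varnothing$. $\Xi$ is the set of infinite sequences of feasible subgraphs, $\phi_\lambda=(\mathcal V,\mathcal E_\lambda)$. With $\mathcal G_q=(\mathcal V,\bigcup_{i\in\mathcal V_q(i^* )}\mathcal E_i^-)$, the synchronization string w.r.t. $i^*$ is $\zeta=\mathcal G_0\cdots\mathcal G_0\cdots\mathcal G_{q^*-1}\cdots\mathcal G_{q^*-1}$, each $\mathcal G_q$ repeated consecutively $\ell^*$ times. Hybrid system $\mathcal H_\xi$: state $x=(\tau,\lambda)\in\mathbb R^N_{\ge0}\times\mathbb Z_{\ge0}$; flow set $C=[0,1]^N\times\mathbb Z_{\ge0}$ with $\dot\tau=\frac1T\mathbf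 1_N$, $\dot\lambda=0$; jump set $D=\{\tau\in[0,1]^N:\max_i\tau_i=1\}\times\mathbb Z_{\ge0}$ with $x^+\in G_{\lambda+1}(\tau)\times\{\lambda+1\}$, where $G_\lambda$ is the outer-semicontinuous hull of $G_\lambda^0(\tau)=\{g:g_i=0,\ g_j\in\mathcal R_{j,\lambda}(\tau)\ \forall j\ne i\}$, $i$ an agent with $\tau_i=1$, and $\mathcal R_{j,\lambda}(\tau)=\{0\}$, $\{0,1\}$, $\{1\}$ if $(i,j)\in\mathcal E_\lambda$ and $\tau_j<r_j$, $=r_j$, $>r_j$ respectively, and $\{\tau_j\}$ if $(i,j)\notin\mathcal E_\lambda$. Solutions are hybrid arcs on hybrid time domains (unions of $[t_k,t_{k+1}]\times\{k\}$) that flow in $C$ according to the flow map and jump from $D$ via the jump map; maximal means not properly extendable. $(t_1,k_1)\preceq(t_2,k_2)$ means $t_1\le t_2$, $k_1\le k_2$. $\mathcal A_q(i^* )$ is the set of $\tau\in[0,1]^N$ such that the subvector $(\tau_j)_{j\in\mathcal U_q(i^* )}$ either has all entries equal or has all entries in $\{0,1\}$ (entries of $\tau$ outside $\mathcal U_q(i^* )$ arbitrary in $[0,1]$). *)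

(* Defs.v *)
From Stdlib Require Import Reals.
From mathcomp Require Import all_boot.

Set Implicit Arguments.
Unset Strict Implicit.
Unset Printing Implicit Defensive.

Local Open Scope R_scope.

Section Defs.
Variable N : nat.
Notation V := 'I_N.

(* Graph notions.  E : rel V, E i j  <->  (i,j) is an edge, i.e. j is an
   out-neighbor of i.                                                   *)

(* s is (the tail of) a path i = v0, v1, ..., vm = j : consecutive pairs are
   edges, vertices pairwise distinct; its length is size s.             *)
Definition is_path (E : rel V) (i j : V) (s : seq V) : Prop :=
  path E i s /\ uniq (i :: s) /\ last i s = j.

Definition is_root (E : rel V) (i : V) : Prop :=
  forall j : V, exists s, is_path E i j s.

Definition dist_is (E : rel V) (i j : V) (q : nat) : Prop :=
  (exists s, is_path E i j s /\ size s = q) /\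
  (forall s, is_path E i j s -> (q <= size s)%nat).

Definition in_Vq (E : rel V) (i : V) (q : nat) (j : V) : Prop := dist_is E i j q.

Definition in_Uq (E : rel V) (i : V) (q : nat) (j : V) : Prop :=
  exists l, (l <= q)%nat /\ in_Vq E i l j.

Definition is_max_dist (E : rel V) (i : V) (qs : nat) : Prop :=
  (exists j, dist_is E i j qs) /\ (forall j q, dist_is E i j q -> (q <= qs)%nat).

(* r_min = min_i r_i and l^* = N (floor(1/r_min) + 1).
   Int_part is the floor function of the Stdlib reals (up x - 1).     *)
Definition rmin (r : V -> R) : R :=
  let s := [seq r i | i <- enum V] in foldr Rmin (head 0 s) s.

Definition lstar (r : V -> R) : nat :=
  (N * (Z.to_nat (Int_part (/ rmin r)) + 1))%nat.

(* Subgraphs (V, E') are represented by their edge sets E' : V -> V -> Prop. *)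

Definition feasible (E : rel V) (E' : V -> V -> Prop) : Prop :=
  (forall a b, E' a b -> E a b) /\
  (forall i, (forall j, E i j -> E' i j) \/ (forall j, ~ E' i j)).

(* xi = phi_1 phi_2 ... in Xi ; xi k is the edge set of phi_k (k >= 1;
   the entry xi 0 is unused). *)
Definition in_Xi (E : rel V) (xi : nat -> V -> V -> Prop) : Prop :=
  forall k, (1 <= k)%nat -> feasible E (xi k).

Definition Gq (E : rel V) (istar : V) (q : nat) (a b : V) : Prop :=
  E a b /\ in_Vq E istar q a.

(* phi_{k0} ... phi_{k0 + q* l* - 1} = zeta  (zeta = G_0^{l*} ... G_{q*-1}^{l*}) *)
Definition sync_at (E : rel V) (istar : V) (qs ls : nat)
    (xi : nat -> V -> V -> Prop) (k0 : nat) : Prop :=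
  forall q p, (q < qs)%nat -> (p < ls)%nat ->
    forall a b, xi (k0 + q * ls + p)%nat a b <-> Gq E istar q a b.

Definition in_unit_cube (tau : V -> R) : Prop := forall a, 0 <= tau a <= 1.

(* flow set C (tau-component; lambda ranges over all of Z_{>=0}) *)
Definition inC (tau : V -> R) : Prop := in_unit_cube tau.

Definition inD (tau : V -> R) : Prop := in_unit_cube tau /\ exists i, tau i = 1.

Definition Rset (r : V -> R) (El : V -> V -> Prop) (i j : V) (tau : V -> R)
    (g : R) : Prop :=
  (El i j /\
     ((tau j < r j /\ g = 0) \/
      (tau j = r j /\ (g = 0 \/ g = 1)) \/
      (tau j > r j /\ g = 1))) \/
  (~ El i j /\ g = tau j).

Definition G0 (r : V -> R) (xi : nat -> V -> V -> Prop) (l : nat)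
    (tau g : V -> R) : Prop :=
  in_unit_cube tau /\
  exists i, tau i = 1 /\ g i = 0 /\
    forall j, j != i -> Rset r (xi l) i j tau (g j).

(* G_lambda: outer-semicontinuous hull of G^0_lambda, i.e. the set-valued
   map whose graph is the closure of the graph of G^0_lambda. *)
Definition Ghull (r : V -> R) (xi : nat -> V -> V -> Prop) (l : nat)
    (tau g : V -> R) : Prop :=
  forall eps, 0 < eps -> exists tau' g',
    G0 r xi l tau' g' /\
    (forall a, Rabs (tau' a - tau a) < eps) /\
    (forall a, Rabs (g' a - g a) < eps).

Definition compact_htd (Ed : R -> nat -> Prop) : Prop :=
  exists (J : nat) (t : nat -> R),
    t O = 0 /\ (forall j, (j < J)%nat -> t j <= t j.+1) /\
    forall s j, Ed s j <-> ((j < J)%nat /\ t j <= s <= t j.+1).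

Definition htd (dom : R -> nat -> Prop) : Prop :=
  forall T' J', dom T' J' ->
    compact_htd (fun s j => dom s j /\ s <= T' /\ (j <= J')%nat).

Definition interior_pt (dom : R -> nat -> Prop) (j : nat) (s : R) : Prop :=
  exists e, 0 < e /\ forall u, Rabs (u - s) < e -> dom u j.

Definition is_solution (T : R) (r : V -> R) (xi : nat -> V -> V -> Prop)
    (dom : R -> nat -> Prop) (tau : R -> nat -> V -> R) (lam : R -> nat -> nat)
    : Prop :=
  htd dom /\
  dom 0 O /\
  inC (tau 0 O) /\
  (forall j s, dom s j -> forall a, forall e, 0 < e -> exists d, 0 < d /\
       forall u, dom u j -> Rabs (u - s) < d -> Rabs (tau u j a - tau s j a) < e) /\
  (forall j s, interior_pt dom j s ->
       inC (tau s j) /\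
       forall a, derivable_pt_lim (fun u => tau u j a) s (/ T)) /\
  (forall j s u, dom s j -> dom u j -> lam s j = lam u j) /\
  (forall t j, dom t j -> dom t j.+1 ->
       inD (tau t j) /\
       Ghull r xi (lam t j).+1 (tau t j) (tau t j.+1) /\
       lam t j.+1 = (lam t j).+1).

Definition is_maximal_solution (T : R) (r : V -> R) (xi : nat -> V -> V -> Prop)
    (dom : R -> nat -> Prop) (tau : R -> nat -> V -> R) (lam : R -> nat -> nat)
    : Prop :=
  is_solution T r xi dom tau lam /\
  forall dom' tau' lam',
    is_solution T r xi dom' tau' lam' ->
    (forall t j, dom t j -> dom' t j /\ tau' t j = tau t j /\ lam' t j = lam t j) ->
    forall t j, dom' t j -> dom t j.

Definition is_min_time (dom : R -> nat -> Prop) (k : nat) (tq : R) : Prop :=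
  dom tq k /\ forall t, 0 <= t -> dom t k -> tq <= t.

Definition in_Aq (E : rel V) (istar : V) (q : nat) (tau : V -> R) : Prop :=
  in_unit_cube tau /\
  ((forall a b, in_Uq E istar q a -> in_Uq E istar q b -> tau a = tau b) \/
   (forall a, in_Uq E istar q a -> tau a = 0 \/ tau a = 1)).

End Defs.

(* Main.v *)
Require Import Defs.
From Stdlib Require Import Reals Lra Lia Classical ClassicalEpsilon.
From mathcomp Require Import all_boot zify.

Set Implicit Arguments.
Unset Strict Implicit.
Unset Printing Implicit Defensive.
Local Open Scope R_scope.

Lemma eq_eps (x y : R) : (forall e, 0 < e -> Rabs (x - y) < e) -> x = y.
Proof.
intros H. destruct (Req_dec x y) as [h|n]; auto. exfalso.
have h: 0 < Rabs (x-y) by apply Rabs_pos_lt; lra.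
specialize (H _ h). lra.
Qed.

Lemma in01_eps g : (forall e, 0 < e -> Rabs g < e \/ Rabs (g-1) < e) -> g = 0 \/ g = 1.
Proof.
intros H. apply NNPP => hn.
have h0 : g <> 0 by move=> e; apply hn; left.
have h1 : g <> 1 by move=> e; apply hn; right.
have p0 : 0 < Rabs g by apply Rabs_pos_lt.
have p1 : 0 < Rabs (g-1) by apply Rabs_pos_lt; lra.
have pm : 0 < Rmin (Rabs g) (Rabs (g-1)) by apply Rmin_glb_lt.
have := Rmin_l (Rabs g) (Rabs (g-1)). have := Rmin_r (Rabs g) (Rabs (g-1)).
case: (H _ pm) => ?; lra.
Qed.

Section Graph.
Variable N : nat.
Variable E : rel 'I_N.
Variable i : 'I_N.

Lemma dist_uniq j q1 q2 : dist_is E i j q1 -> dist_is E i j q2 -> q1 = q2.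
Proof.
move=> [[s1 [p1 e1]] m1] [[s2 [p2 e2]] m2].
have := m1 _ p2. have := m2 _ p1. lia.
Qed.

Lemma U0_istar a : in_Uq E i 0 a -> a = i.
Proof.
move=> [l [hl [[s [[_ [_ hs]] sz] _]]]].
have l0 : l = 0%N by lia. rewrite l0 in sz.
by case: s hs sz => [|? ?] //= <-.
Qed.

Lemma istar_Vq0 : in_Vq E i 0 i.
Proof.
split; last by move=> *; lia.
exists [::]; split => //.
Qed.

Lemma istar_Uq q : in_Uq E i q i.
Proof. exists 0%N; split; [lia | exact istar_Vq0]. Qed.

Lemma dist_ex_n n j : (exists s, is_path E i j s /\ size s = n) -> exists l, dist_is E i j l.
Proof.
elim: n {-2}n (leqnn n) => [|n IH] m hm [s [ps sz]].
- exists 0%N. split.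
  + exists s. split => //. lia.
  + move=> *. lia.
- case: (classic (forall s', is_path E i j s' -> (m <= size s')%N)) => hc.
  + exists m; split => //. by exists s.
  + apply not_all_ex_not in hc. case: hc => s' hs'.
    apply imply_to_and in hs'. case: hs' => ps' hlt.
    apply: (IH (size s')) => //. lia. by exists s'.
Qed.

Lemma dist_ex j : is_root E i -> exists l, dist_is E i j l.
Proof. move=> hr. case: (hr j) => s ps. by apply: (@dist_ex_n (size s)); exists s. Qed.

Lemma all_Uqs qs a : is_root E i -> is_max_dist E i qs -> in_Uq E i qs a.
Proof.
move=> hr [_ hm]. case: (dist_ex a hr) => l hl. exists l; split => //. exact: hm hl.
Qed.

Lemma Uq_mono m m' a : (m <= m')%N -> in_Uq E i m a -> in_Uq E i m' a.
Proof. move=> h [l [hl hv]]. exists l; split => //. lia. Qed.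

Lemma Vq_Uq q a : in_Vq E i q a -> in_Uq E i q a.
Proof. move=> h. exists q; split => //. Qed.

Lemma U_succ q b : in_Uq E i q.+1 b -> in_Uq E i q b \/ in_Vq E i q.+1 b.
Proof.
move=> [l [hl hv]]. case: (l =P q.+1) => h.
- by subst; right.
- left; exists l; split => //. lia.
Qed.

Lemma shorten_ex (T:eqType) (e : rel T) (x:T) p : path e x p ->
  exists p', path e x p' /\ uniq (x::p') /\ {subset p' <= p} /\ last x p' = last x p.
Proof. move=> h. case: (shortenP h) => p' a b c. by exists p'. Qed.

Lemma pred_V q b : in_Vq E i q.+1 b -> exists v, in_Vq E i q v /\ E v b.
Proof.
move=> [[s [[ps [us ls]] sz]] hmin].
case/lastP: s ps us ls sz => [|s' x] //= ps us ls sz.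
rewrite last_rcons in ls. subst x.
rewrite rcons_path in ps. case/andP: ps => ps' eb.
rewrite size_rcons in sz.
have us' : uniq (i :: s').
  have: uniq (rcons (i :: s') b) by [].
  by rewrite rcons_uniq => /andP [].
exists (last i s'); split => //.
split. exists s'. split; last by lia. by split.
move=> s'' [ps'' [us'' ls'']].
apply/negP => /negP; rewrite -ltnNge => hlt.
have pr : path E i (rcons s'' b) by rewrite rcons_path ps'' ls'' eb.
case: (shorten_ex pr) => p' [pp' [up' [sub]]].
rewrite last_rcons => lp'.
have : (size p' <= size (rcons s'' b))%N.
  apply: uniq_leq_size => //. by case/andP: up'.
rewrite size_rcons => hs.
have := hmin p'. have hp : is_path E i b p' by split; [|split].
move=> /(_ hp) h2. have := leq_trans hs hlt. by rewrite leqNgt h2.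
Qed.
End Graph.

Lemma Rmin_or x y : Rmin x y = x \/ Rmin x y = y.
Proof. rewrite /Rmin; destruct (Rle_dec x y); auto. Qed.

Lemma rmin_is (N : nat) (r : 'I_N -> R) (i0 : 'I_N) : exists i, rmin r = r i.
Proof.
rewrite /rmin. have: i0 \in enum 'I_N by rewrite mem_enum.
case: (enum 'I_N) => [|a l] //= _.
have H: forall l', foldr Rmin (r a) [seq r i | i <- l'] = r a \/
                   exists i, foldr Rmin (r a) [seq r i | i <- l'] = r i.
  elim => [|b l' IH] /=; first by left.
  case: (Rmin_or (r b) (foldr Rmin (r a) [seq r i | i <- l'])) => ->.
  by right; exists b. exact IH.
case: (Rmin_or (r a) (foldr Rmin (r a) [seq r i | i <- l])) => ->.
by exists a.
case: (H l) => [->|//]. by exists a.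
Qed.

Lemma ls_ge2N (N : nat) (r : 'I_N -> R) (i0 : 'I_N) :
  (forall i, 0 < r i < 1) -> (2 * N <= lstar r)%N.
Proof.
move=> r01. rewrite /lstar. case: (rmin_is r i0) => i ->.
have h1 : 1 < / r i.
  rewrite -Rinv_1. apply Rinv_lt_contravar; have := r01 i; nra.
have hz : (1 <= Z.to_nat (Int_part (/ r i)))%N.
  rewrite /Int_part. case: (archimed (/ r i)) => h2 _.
  have : (1 < up (/ r i))%Z by apply lt_IZR; lra.
  lia.
rewrite [(N * _)%N]mulnC. apply: leq_mul => //. lia.
Qed.

Section RsetH.
Variable N : nat.
Variable r : 'I_N -> R.
Hypothesis r01 : forall i, 0 < r i < 1.

Lemma R_edge01 El i j y g : Defs.Rset r El i j y g -> El i j -> g = 0 \/ g = 1.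
Proof. case=> [[_ [[_ ->]|[[_ h]|[_ ->]]]]|[h _]] he; tauto. Qed.

Lemma R_nonedge El i j y g : Defs.Rset r El i j y g -> ~ El i j -> g = y j.
Proof. case=> [[h _]|[_ ->]] he //; by case: he. Qed.

Lemma R_0 El i j y g : Defs.Rset r El i j y g -> y j = 0 -> g = 0.
Proof.
move=> hR hy; have := r01 j.
case: hR => [[_ [[_ ->]|[[h _]|[h _]]]]|[_ ->]] //; lra.
Qed.

Lemma R_1 El i j y g : Defs.Rset r El i j y g -> y j = 1 -> g = 1.
Proof.
move=> hR hy; have := r01 j.
case: hR => [[_ [[h _]|[[h _]|[_ ->]]]]|[_ ->]] //; lra.
Qed.

Lemma R_01 El i j y g : Defs.Rset r El i j y g -> y j = 0 \/ y j = 1 -> g = 0 \/ g = 1.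
Proof. move=> h [h0|h1]; [left; exact: R_0 h h0 | right; exact: R_1 h h1]. Qed.

Lemma R_iff (El El' : 'I_N -> 'I_N -> Prop) i j y g :
  (El i j <-> El' i j) -> Defs.Rset r El i j y g -> Defs.Rset r El' i j y g.
Proof. move=> e [[h1 h2]|[h1 h2]]; [left|right]; tauto. Qed.

Lemma R_cube El i j y g : Defs.Rset r El i j y g -> 0 <= y j <= 1 -> 0 <= g <= 1.
Proof.
move=> h hy. case: (classic (El i j)) => he.
- case: (R_edge01 h he) => ->; lra.
- by rewrite (R_nonedge h he).
Qed.
End RsetH.

Lemma Ghull_G0 (N : nat) (r : 'I_N -> R) xi l (y g : 'I_N -> R) :
  inD y -> Ghull r xi l y g -> G0 r xi l y g.
Proof.
move=> [cy _] hg.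
pose P i e := exists tau' g', (tau' i = 1 /\ g' i = 0 /\
     forall j, j != i -> Defs.Rset r (xi l) i j tau' (g' j)) /\
   (forall a, Rabs (tau' a - y a) < e) /\ (forall a, Rabs (g' a - g a) < e).
have Pmono : forall i e e', e <= e' -> P i e -> P i e'.
  move=> i e e' le [t' [g' [h1 [h2 h3]]]]. exists t', g'; split => //; split => a.
  by have := h2 a; lra. by have := h3 a; lra.
have [i Hi] : exists i, forall e, 0 < e -> P i e.
  apply NNPP => hn.
  have hall : forall i, exists e, 0 < e /\ ~ P i e.
    move=> i. apply NNPP => h2. apply hn. exists i => e he.
    apply NNPP => h3. apply h2. by exists e.
  have hl : forall s : seq 'I_N, exists e, 0 < e /\ forall i, i \in s -> ~ P i e.
    elim => [|a s [e [he hs]]]; first by exists 1; split => //; lra.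
    case: (hall a) => ea [hea hna].
    exists (Rmin e ea); split; first by apply Rmin_glb_lt.
    move=> i; rewrite inE => /orP [/eqP ->|hi] hp.
    + apply: hna; apply: Pmono hp; apply Rmin_r.
    + apply: (hs i hi); apply: Pmono hp; apply Rmin_l.
  case: (hl (enum 'I_N)) => e [he hs].
  case: (hg e he) => t' [g' [[_ [i [h1 [h2 h3]]]] [h4 h5]]].
  apply: (hs i); first by rewrite mem_enum.
  exists t', g'; split => //.
have yi : y i = 1.
  apply: eq_eps => e he. case: (Hi e he) => t' [g' [[h1 _] [h2 _]]].
  have := h2 i. rewrite h1 Rabs_minus_sym. done.
have gi : g i = 0.
  apply: eq_eps => e he. case: (Hi e he) => t' [g' [[_ [h1 _]] [_ h2]]].
  have := h2 i. rewrite h1 Rabs_minus_sym. done.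
split => //. exists i; split => //; split => // j hj.
case: (classic (xi l i j)) => he.
- left; split => //.
  case: (Rtotal_order (y j) (r j)) => [hlt|[heq|hgt]].
  + left; split => //. apply: eq_eps => e he'.
    have hm : 0 < Rmin e (r j - y j) by apply Rmin_glb_lt; lra.
    case: (Hi _ hm) => t' [g' [[_ [_ h1]] [h2 h3]]].
    have := Rmin_l e (r j - y j); have := Rmin_r e (r j - y j).
    have := h2 j; have := h3 j => a3 a2 m1 m2.
    have t'lt : t' j < r j by move: a2 => /Rabs_def2; lra.
    case: (h1 j hj) => [[_ [[_ e0]|[[e1 _]|[e1 _]]]]|[hh _]] //; try lra.
    move: a3; rewrite e0 Rminus_0_r Rminus_0_l Rabs_Ropp. lra.
  + right; left; split => //. apply: in01_eps => e he'.
    case: (Hi _ he') => t' [g' [[_ [_ h1]] [h2 h3]]].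
    have := h3 j.
    case: (R_edge01 (h1 j hj) he) => ->.
    * rewrite Rminus_0_l Rabs_Ropp => ?; by left.
    * rewrite Rabs_minus_sym => ?; by right.
  + right; right; split => //. apply: eq_eps => e he'.
    have hm : 0 < Rmin e (y j - r j) by apply Rmin_glb_lt; lra.
    case: (Hi _ hm) => t' [g' [[_ [_ h1]] [h2 h3]]].
    have := Rmin_l e (y j - r j); have := Rmin_r e (y j - r j).
    have := h2 j; have := h3 j => a3 a2 m1 m2.
    have t'gt : t' j > r j by move: a2 => /Rabs_def2; lra.
    case: (h1 j hj) => [[_ [[e1 _]|[[e1 _]|[_ e0]]]]|[hh _]] //; try lra.
    move: a3; rewrite e0 Rabs_minus_sym. lra.
- right; split => //. apply: eq_eps => e he'.
  have he2 : 0 < e / 2 by lra.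
  case: (Hi _ he2) => t' [g' [[_ [_ h1]] [h2 h3]]].
  have := h2 j; have := h3 j. rewrite (R_nonedge (h1 j hj) he) => a3 a2.
  have := Rabs_triang (g j - t' j) (t' j - y j).
  rewrite (Rabs_minus_sym (g j)). 
  have -> : g j - t' j + (t' j - y j) = g j - y j by ring.
  lra.
Qed.

Lemma G0_cube (N : nat) (r : 'I_N -> R) xi l (y g : 'I_N -> R) :
  G0 r xi l y g -> in_unit_cube g.
Proof.
move=> [cy [i [_ [gi hr]]]] j.
case: (j =P i) => [->|/eqP hj]; first by rewrite gi; lra.
exact: R_cube (hr j hj) (cy j).
Qed.

Lemma const_open (h : R -> R) lo hi :
  (forall u, lo < u < hi -> derivable_pt_lim h u 0) ->
  forall u v, lo < u < hi -> lo < v < hi -> h u = h v.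
Proof.
move=> hd u v hu hv.
have key : forall u v, lo < u < hi -> lo < v < hi -> u < v -> h u = h v.
  move=> u' v' hu' hv' lt.
  case: (MVT_cor2 h (fun _ => 0) u' v' lt) => [c hc|c [hc _]].
  - apply: hd; lra.
  - lra.
case: (Rtotal_order u v) => [lt|[->|gt]] //.
- exact: key.
- symmetry; exact: key.
Qed.

Lemma endpoint_eq (g : R -> R) c lo hi (x0 : R) :
  lo < hi ->
  (forall u, lo < u < hi -> g u - c * u = x0) ->
  forall p, lo <= p <= hi ->
  (forall e, 0 < e -> exists d, 0 < d /\ forall u, lo <= u <= hi -> Rabs (u - p) < d -> Rabs (g u - g p) < e) ->
  g p - c * p = x0.
Proof.
move=> lh hc p hp hcont.
apply: eq_eps => e he.
have he2 : 0 < e / 2 by lra.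
case: (hcont _ he2) => d [hd hd'].
set k := Rabs c + 1.
have hk : 0 < k by rewrite /k; have := Rabs_pos c; lra.
set del := Rmin (d / 2) (Rmin ((hi - lo) / 4) (e / (2 * k))).
have hdel : 0 < del.
  apply Rmin_glb_lt; [lra|apply Rmin_glb_lt; [lra|]].
  apply Rdiv_lt_0_compat; lra.
have d1 : del <= d / 2 by apply Rmin_l.
have d2 : del <= (hi - lo) / 4 by rewrite /del; eapply Rle_trans; [apply Rmin_r|apply Rmin_l].
have d3 : del <= e / (2 * k) by rewrite /del; eapply Rle_trans; [apply Rmin_r|apply Rmin_r].
have d4 : k * del <= e / 2.
  have : k * del <= k * (e / (2 * k)) by apply Rmult_le_compat_l; lra.
  have -> : k * (e / (2 * k)) = e / 2 by field; lra.
  done.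
pose u := if Rle_dec p ((lo + hi) / 2) then p + del else p - del.
have hu : lo < u < hi /\ Rabs (u - p) = del.
  rewrite /u; destruct (Rle_dec _ _); simpl.
  - split; [lra|]. have -> : p + del - p = del by ring. by apply Rabs_pos_eq; lra.
  - split; [lra|]. have -> : p - del - p = - del by ring. rewrite Rabs_Ropp. by apply Rabs_pos_eq; lra.
case: hu => hu1 hu2.
have hgu := hd' u (conj (Rlt_le _ _ (proj1 hu1)) (Rlt_le _ _ (proj2 hu1))) ltac:(lra).
have hcu := hc u hu1.
have : Rabs (c * (u - p)) <= k * del.
  rewrite Rabs_mult hu2. apply Rmult_le_compat_r; rewrite /k; lra.
move=> hcc.
have := Rabs_triang (-(g u - g p)) (c * (u - p)).
rewrite Rabs_Ropp.
have -> : -(g u - g p) + c * (u - p) = g p - c * p - x0 by rewrite -hcu; ring.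
lra.
Qed.

Lemma affine_lemma (g : R -> R) (lo hi c : R) :
  lo <= hi ->
  (forall u, lo < u < hi -> derivable_pt_lim g u c) ->
  (forall p, lo <= p <= hi -> forall e, 0 < e -> exists d, 0 < d /\
      forall u, lo <= u <= hi -> Rabs (u - p) < d -> Rabs (g u - g p) < e) ->
  forall s, lo <= s <= hi -> g s = g lo + c * (s - lo).
Proof.
move=> lh hd hcont s hs.
case: (Req_dec lo hi) => [eq|ne].
- have -> : s = lo by lra. ring.
have lt : lo < hi by lra.
pose h := fun x => g x - c * x.
have hdh : forall u, lo < u < hi -> derivable_pt_lim h u 0.
  move=> u hu.
  have -> : 0 = c - c * 1 by ring.
  change (derivable_pt_lim (minus_fct g (mult_real_fct c id)) u (c - c * 1)).
  apply: derivable_pt_lim_minus; first by apply hd.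
  apply: derivable_pt_lim_scal. apply: derivable_pt_lim_id.
set m := (lo + hi) / 2.
have hm : lo < m < hi by rewrite /m; lra.
have hc : forall u, lo < u < hi -> g u - c * u = h m.
  move=> u hu. exact: (const_open hdh hu hm).
have e1 := endpoint_eq lt hc (conj (Rle_refl lo) lh) (hcont lo (conj (Rle_refl lo) lh)).
have e2 := endpoint_eq lt hc hs (hcont s hs).
lra.
Qed.

Section Hyb.
Variables (N : nat) (T : R) (r : 'I_N -> R) (xi : nat -> 'I_N -> 'I_N -> Prop)
  (dom : R -> nat -> Prop) (tau : R -> nat -> 'I_N -> R) (lam : R -> nat -> nat).
Hypothesis Tpos : 0 < T.
Hypothesis Hsol : is_solution T r xi dom tau lam.
Hypothesis lam0 : lam 0 O = O.

Definition trunc_of (T0 : R) (J0 : nat) (t : nat -> R) : Prop :=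
  t O = 0 /\ (forall j, (j <= J0)%N -> t j <= t j.+1) /\
  (forall j s, (j <= J0)%N -> t j <= s <= t j.+1 -> dom s j /\ s <= T0) /\
  (forall j s, dom s j -> s <= T0 -> (j <= J0)%N -> t j <= s <= t j.+1).

Lemma trunc_ex T0 J0 : dom T0 J0 -> exists t, trunc_of T0 J0 t.
Proof.
move=> hd. case: Hsol => hhtd _.
case: (hhtd T0 J0 hd) => J [t [t0 [tmono tiff]]].
have hJ : (J0 < J)%N.
  by case: (proj1 (tiff T0 J0) (conj hd (conj (Rle_refl _) (leqnn _)))).
exists t; split => //; split; [|split].
- move=> j hj; apply tmono; lia.
- move=> j s hj hs.
  have hjJ : (j < J)%N by lia.
  by case: (proj2 (tiff s j) (conj hjJ hs)) => ? [? ?].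
- move=> j s hd' hs hj. by case: (proj1 (tiff s j) (conj hd' (conj hs hj))).
Qed.

Section Tr.
Variables (T0 : R) (J0 : nat) (t : nat -> R).
Hypothesis htr : trunc_of T0 J0 t.

Lemma tr_mono i j : (i <= j)%N -> (j <= J0.+1)%N -> t i <= t j.
Proof.
case: htr => _ [hm _].
elim: j => [|j IH] hij hj.
- have -> : i = 0%N by lia. lra.
- case: (i =P j.+1) => [->|ne]; first lra.
  have := IH ltac:(lia) ltac:(lia). have := hm j ltac:(lia). lra.
Qed.

Lemma tr_nonneg j : (j <= J0.+1)%N -> 0 <= t j.
Proof. move=> hj. case: htr => t0 _. rewrite -t0. apply: tr_mono => //. Qed.

Lemma tr_dom j s : (j <= J0)%N -> t j <= s <= t j.+1 -> dom s j.
Proof. case: htr => _ [_ [h _]] hj hs. by case: (h j s hj hs). Qed.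

Lemma tr_le j s : (j <= J0)%N -> t j <= s <= t j.+1 -> s <= T0.
Proof. case: htr => _ [_ [h _]] hj hs. by case: (h j s hj hs). Qed.

Lemma tr_step j : (j <= J0)%N -> t j <= t j.+1.
Proof. case: htr => _ [h _] hj. exact: h. Qed.

Lemma lam_tr j s : (j <= J0)%N -> t j <= s <= t j.+1 -> lam s j = j.
Proof.
case: Hsol => [_ [hd00 [_ [_ [_ [hlam hjump]]]]]].
elim: j s => [|j IH] s hj hs.
- rewrite (hlam 0%N s 0) //. exact: tr_dom hj hs.
- have d1 : dom (t j.+1) j.
    apply: (tr_dom (j:=j)); first lia. have := tr_step (j:=j) ltac:(lia). lra.
  have d2 : dom (t j.+1) j.+1.
    apply: tr_dom => //. have := tr_step hj. lra.
  rewrite (hlam j.+1 s (t j.+1) (tr_dom hj hs) d2).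
  case: (hjump _ _ d1 d2) => _ [_ ->].
  rewrite (IH (t j.+1)) //; first lia. have := tr_step (j:=j) ltac:(lia). lra.
Qed.

Lemma jump_tr j : (j < J0)%N ->
  inD (tau (t j.+1) j) /\ G0 r xi j.+1 (tau (t j.+1) j) (tau (t j.+1) j.+1).
Proof.
case: Hsol => [_ [hd00 [_ [_ [_ [hlam hjump]]]]]] hj.
have d1 : dom (t j.+1) j.
  apply: (tr_dom (j:=j)); first lia. have := tr_step (j:=j) ltac:(lia). lra.
have d2 : dom (t j.+1) j.+1.
  apply: tr_dom => //. have := tr_step hj. lra.
case: (hjump _ _ d1 d2) => hD [hG _].
rewrite (lam_tr (j:=j)) in hG; first by split => //; exact: Ghull_G0 hD hG.
lia. have := tr_step (j:=j) ltac:(lia). lra.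
Qed.

Lemma interior_tr j s : (j <= J0)%N -> t j < s < t j.+1 -> interior_pt dom j s.
Proof.
move=> hj hs. exists (Rmin (s - t j) (t j.+1 - s)). split.
  apply Rmin_glb_lt; lra.
move=> u hu. apply: tr_dom => //.
have := Rmin_l (s - t j) (t j.+1 - s). have := Rmin_r (s - t j) (t j.+1 - s).
move: hu => /Rabs_def2. lra.
Qed.

Lemma flow_tr j s a : (j <= J0)%N -> t j <= s <= t j.+1 ->
  tau s j a = tau (t j) j a + (s - t j) / T.
Proof.
case: Hsol => [_ [hd00 [_ [hcont [hflow _]]]]] hj hs.
have st := tr_step hj.
have := @affine_lemma (fun u => tau u j a) (t j) (t j.+1) (/ T) st.
move=> /(_ _ _ s hs) ->.
- rewrite /Rdiv. ring.
- move=> u hu. case: (hflow j u (interior_tr hj hu)) => _ h. exact: h.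
- move=> p hp e he. case: (hcont j p (tr_dom hj hp) a e he) => d [hd hd'].
  exists d; split => // u hu hup. apply: hd' => //. exact: tr_dom hj hu.
Qed.

Lemma cube_start j : (j <= J0)%N -> in_unit_cube (tau (t j) j).
Proof.
case: Hsol => [_ [hd00 [hC _]]].
elim: j => [|j IH] hj.
- case: htr => -> _. exact hC.
- case: (jump_tr (j:=j) hj) => _ hG. exact: G0_cube hG.
Qed.

Lemma cube_tr j s : (j <= J0)%N -> t j <= s <= t j.+1 -> in_unit_cube (tau s j).
Proof.
case: Hsol => [_ [hd00 [hC [hcont [hflow _]]]]] hj hs a.
have cs := cube_start hj a.
rewrite (flow_tr a hj hs).
have h0 : 0 <= (s - t j) / T by apply Rmult_le_pos; [lra| apply Rlt_le, Rinv_0_lt_compat; lra].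
split; first lra.
case: (Req_dec s (t j)) => [->|ne]; first lra.
apply: Rnot_lt_le => hgt.
set x := tau (t j) j a in cs hgt *.
set ex := x + (s - t j) / T - 1.
have hex : 0 < ex by rewrite /ex; lra.
set del := Rmin ((s - t j) / 2) (ex * T / 2).
have hdel : 0 < del by apply Rmin_glb_lt; [lra|]; apply Rmult_lt_0_compat; [apply Rmult_lt_0_compat|]; lra.
have d1 : del <= (s - t j) / 2 by apply Rmin_l.
have d2 : del <= ex * T / 2 by apply Rmin_r.
have hlt : t j < s by case: hs => h1 _; case: h1 => // h1; congruence.
have hu : t j < s - del < t j.+1 by lra.
case: (hflow j (s - del) (interior_tr hj hu)) => hc _.
have := hc a. rewrite (flow_tr a hj (conj (Rlt_le _ _ (proj1 hu)) (Rlt_le _ _ (proj2 hu)))).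
fold x.
have : (s - del - t j) / T = (s - t j) / T - del / T by field; lra.
have : del / T <= ex / 2.
  have -> : ex / 2 = (ex * T / 2) / T by field; lra.
  apply Rmult_le_compat_r; [apply Rlt_le, Rinv_0_lt_compat; lra| exact d2].
rewrite /ex. lra.
Qed.
End Tr.

Lemma cube_dom s j : dom s j -> in_unit_cube (tau s j).
Proof.
move=> hd. case: (trunc_ex hd) => t htr.
apply: (cube_tr htr (leqnn j)).
case: htr => _ [_ [_ h]]. apply: h => //. lra.
Qed.

Lemma dom_lower s k k' : dom s k -> (k' <= k)%N -> exists s', 0 <= s' <= s /\ dom s' k'.
Proof.
move=> hd hk. case: (trunc_ex hd) => t htr.
have hs : t k <= s <= t k.+1 by case: htr => _ [_ [_ h]]; apply: h => //; lra.
exists (t k'); split.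
- split; first by apply: (tr_nonneg htr); lia.
  have := tr_mono htr hk ltac:(lia). lra.
- apply: (tr_dom htr) => //. have := tr_step htr hk. lra.
Qed.
End Hyb.

Definition Cond (N : nat) (E : rel 'I_N) istar (xi : nat -> 'I_N -> 'I_N -> Prop) m l :=
  forall a b, xi l a b -> in_Uq E istar m b -> in_Uq E istar m a.

Section Inv.
Variables (N : nat) (E : rel 'I_N) (istar : 'I_N) (T : R) (r : 'I_N -> R)
  (xi : nat -> 'I_N -> 'I_N -> Prop)
  (dom : R -> nat -> Prop) (tau : R -> nat -> 'I_N -> R) (lam : R -> nat -> nat).
Hypothesis Tpos : 0 < T.
Hypothesis r01 : forall i, 0 < r i < 1.
Hypothesis Hsol : is_solution T r xi dom tau lam.
Hypothesis lam0 : lam 0 O = O.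

Lemma Am_jump m l (y g : 'I_N -> R) :
  in_unit_cube y -> G0 r xi l y g -> Cond E istar xi m l ->
  in_Aq E istar m y -> in_Aq E istar m g.
Proof.
move=> cy hG hC [_ hA]. have cg := G0_cube hG. split => //.
case: hG => _ [i [yi [gi hr]]].
have from01 : (forall a, in_Uq E istar m a -> y a = 0 \/ y a = 1) ->
              (forall a, in_Uq E istar m a -> g a = 0 \/ g a = 1).
  move=> h a ha. case: (a =P i) => [->|/eqP ne]; first by left.
  have := hr a ne. move=> hra. exact (@R_01 N r r01 (xi l) i a y (g a) hra (h a ha)).
case: hA => [heq|h01].
- case: (classic (in_Uq E istar m i)) => hi.
  + right; apply: from01 => a ha; right; by rewrite (heq a i ha hi) yi.
  + left => a b ha hb.
    have gy : forall c, in_Uq E istar m c -> g c = y c.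
      move=> c hc. have ne : c != i by apply/eqP => e; subst c.
      apply: (R_nonedge (hr c ne)) => he. exact: hi (hC _ _ he hc).
    rewrite (gy a ha) (gy b hb). exact: heq.
- right; exact: from01 h01.
Qed.

Lemma Am_flow m (x y : 'I_N -> R) d :
  (forall a, y a = x a + d) -> 0 <= d -> in_unit_cube y ->
  in_Aq E istar m x -> in_Aq E istar m y.
Proof.
move=> hy hd cy [_ [heq|h01]]; split => //.
- left => a b ha hb. rewrite !hy (heq a b ha hb). done.
- case: (Req_dec d 0) => [d0|dn].
  + right => a ha. rewrite hy d0 Rplus_0_r. exact: h01.
  + left => a b ha hb.
    have z : forall c, in_Uq E istar m c -> x c = 0.
      move=> c hc. case: (h01 c hc) => // h1. have := cy c. rewrite hy h1. lra.
    by rewrite !hy (z a ha) (z b hb).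
Qed.

Lemma Am_inv m t k t' k' :
  dom t k -> dom t' k' -> t <= t' -> (k <= k')%N ->
  (forall l, (k < l)%N -> (l <= k')%N -> Cond E istar xi m l) ->
  in_Aq E istar m (tau t k) -> in_Aq E istar m (tau t' k').
Proof.
move=> hd hd' htt hkk hC hA.
case: (trunc_ex Hsol lam0 hd') => ts htr.
have hp : ts k <= t <= ts k.+1 by case: htr => _ [_ [_ h]]; apply: h.
have hp' : ts k' <= t' <= ts k'.+1 by case: htr => _ [_ [_ h]]; apply: h => //; lra.
have claim : forall n (s : R), (k + n <= k')%N -> ts (k + n)%N <= s <= ts (k + n)%N.+1 ->
    (0 < n)%N \/ t <= s -> in_Aq E istar m (tau s (k + n)%N).
  elim => [|n IH] s hn hs ho.
  - rewrite addn0 in hs *. case: ho => // ho.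
    apply: (Am_flow (x := tau t k) (d := (s - t) / T)).
    + move=> a. rewrite (flow_tr Hsol htr a hkk hs) (flow_tr Hsol htr a hkk hp).
      field; lra.
    + apply Rmult_le_pos; [lra| apply Rlt_le, Rinv_0_lt_compat; lra].
    + exact: (cube_tr Tpos Hsol lam0 htr hkk hs).
    + exact hA.
  - have hn' : (k + n < k')%N by lia.
    have ek : (k + n.+1 = (k + n)%N.+1)%N by lia.
    rewrite ek in hs *.
    have hA1 : in_Aq E istar m (tau (ts (k + n)%N.+1) (k + n)%N).
      apply: IH; first lia.
      + have := tr_step htr (j := (k + n)%N) ltac:(lia). lra.
      + case: n hn hs ho hn' ek => [|n] hn hs ho hn' ek; last by left.
        right. rewrite addn0. lra.
    case: (jump_tr Hsol lam0 htr hn') => [[cy _] hG].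
    have hA2 := Am_jump cy hG (hC (k + n)%N.+1 ltac:(lia) ltac:(lia)) hA1.
    apply: (Am_flow (x := tau (ts (k + n)%N.+1) (k + n)%N.+1) (d := (s - ts (k + n)%N.+1) / T)).
    + move=> a. rewrite (flow_tr Hsol htr a (j := (k + n)%N.+1) _ hs) //.
    + apply Rmult_le_pos; [lra| apply Rlt_le, Rinv_0_lt_compat; lra].
    + exact: (cube_tr Tpos Hsol lam0 htr (j := (k + n)%N.+1) _ hs).
    + exact hA2.
have ek : k' = (k + (k' - k))%N by lia.
have := claim (k' - k)%N t' ltac:(lia). rewrite -ek. move=> /(_ hp') H. apply: H. by right.
Qed.
End Inv.

Lemma pigeon (N : nat) (f : nat -> 'I_N) lo n v :
  (forall j, (lo <= j < lo + n)%N -> f j != v) ->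
  (forall j1 j2, (lo <= j1 < lo + n)%N -> (lo <= j2 < lo + n)%N -> f j1 = f j2 -> j1 = j2) ->
  (n < N)%N.
Proof.
move=> hv hinj.
set S := [seq f (lo + i)%N | i <- iota 0 n].
have uS : uniq S.
  rewrite map_inj_in_uniq ?iota_uniq // => i1 i2.
  rewrite !mem_iota => h1 h2 e.
  have := hinj (lo + i1)%N (lo + i2)%N ltac:(lia) ltac:(lia) e. lia.
have sS : {subset S <= enum (predC1 v)}.
  move=> x /mapP [i]; rewrite mem_iota => hi ->.
  rewrite mem_enum inE. apply: hv. lia.
have := uniq_leq_size uS sS.
rewrite size_map size_iota -cardE cardC1 card_ord.
have := ltn_ord v.
lia.
Qed.

Lemma find_switch (P : nat -> Prop) M : P 0%N -> ~ P M ->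
  exists n, (n < M)%N /\ P n /\ ~ P n.+1.
Proof.
move=> h0. elim: M => [|M IH] hM; first by [].
case: (classic (P M)) => hPM.
- exists M; split; [lia | split => //].
- case: (IH hPM) => n [h1 h2]. exists n; split; [lia | done].
Qed.

Lemma Gq_src (N : nat) (E : rel 'I_N) istar q f b : Gq E istar q f b -> in_Uq E istar q f.
Proof. move=> [_ h]. exact: Vq_Uq h. Qed.

Section Core.
Unset Implicit Arguments.
Variables (N : nat) (E : rel 'I_N) (istar : 'I_N) (r : 'I_N -> R) (q : nat)
  (X Y : nat -> 'I_N -> R) (a K : nat).
Hypothesis r01 : forall i, 0 < r i < 1.
Hypothesis hK : (a + 2 * N <= K + 1)%N.
Hypothesis Hflow : forall j, (a <= j <= K)%N -> exists d, (0 <= d) /\ forall b, Y j b = (X j b + d).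
Hypothesis Hcube : forall j, (a <= j <= K)%N -> in_unit_cube (X j) /\ in_unit_cube (Y j).
Hypothesis Hjump : forall j, (a <= j < K)%N -> exists f, Y j f = 1 /\ X j.+1 f = 0 /\
   forall b, b != f -> Defs.Rset r (Gq E istar q) f b (Y j) (X j.+1 b).
Hypothesis HA : forall j, (a <= j <= K)%N -> in_Aq E istar q (X j) /\ in_Aq E istar q (Y j).

Set Implicit Arguments.
Definition fp j f := Y j f = 1 /\ X j.+1 f = 0 /\
   forall b, b != f -> Defs.Rset r (Gq E istar q) f b (Y j) (X j.+1 b).
Definition fi j := epsilon (inhabits istar) (fp j).
Lemma fi_spec j : (a <= j < K)%N -> fp j (fi j).
Proof. move=> h. apply: epsilon_spec. exact: Hjump h. Qed.

Lemma Npos : (0 < N)%N.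
Proof. case: istar => m hm. lia. Qed.

Lemma K1 j u0 : (a <= j < K)%N -> in_Uq E istar q u0 -> in_Uq E istar q (fi j) ->
  Y j u0 = 0 \/ Y j u0 = 1.
Proof.
move=> hj hu hf. case: (HA j ltac:(lia)) => _ [_ [heq|h01]].
- right. rewrite (heq u0 (fi j) hu hf). by case: (fi_spec hj).
- exact: h01.
Qed.

Definition Goal := exists j, (a <= j <= K)%N /\
   (in_Aq E istar q.+1 (X j) \/ in_Aq E istar q.+1 (Y j)).

Section P1.
Variable u0 : 'I_N.
Hypothesis Hu0U : in_Uq E istar q u0.
Hypothesis Hu0min : forall u, in_Uq E istar q u -> (X a u0 <= X a u).

Definition inv1 n :=
  (forall j, (a <= j < a + n)%N -> fi j != u0) /\
  (forall j1 j2, (a <= j1 < a + n)%N -> (a <= j2 < a + n)%N -> fi j1 = fi j2 -> j1 = j2) /\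
  (forall j, (a <= j < a + n)%N -> (X (a + n)%N (fi j) <= X (a + n)%N u0)) /\
  (forall u, in_Uq E istar q u -> (X (a + n)%N u0 <= X (a + n)%N u)).

Lemma inv1_step n : (a + n < K)%N -> inv1 n -> (Y (a + n)%N u0 < 1) -> inv1 n.+1.
Proof.
move=> hn [i1 [i2 [i3 i4]]] hlt.
set j := (a + n)%N in hlt i1 i2 i3 i4 *.
have hj : (a <= j < K)%N by rewrite /j; lia.
case: (Hflow j ltac:(lia)) => d [hd hY].
case: (Hcube j ltac:(lia)) => cX cY.
case: (Hcube j.+1 ltac:(lia)) => cX1 _.
case: (fi_spec hj) => hf1 [hf0 hfr].
set f := fi j in hf1 hf0 hfr.
have hfU : in_Uq E istar q f -> Y j u0 = 0.
  move=> h. case: (K1 hj Hu0U h) => // e. rewrite e in hlt. lra.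
have hne : f != u0 by apply/eqP => e; rewrite e in hf1; lra.
have hu0' : X j.+1 u0 = Y j u0.
  have hr := hfr u0 ltac:(by rewrite eq_sym).
  case: (classic (Gq E istar q f u0)) => he.
  + rewrite (R_0 r01 hr (hfU (Gq_src he))). by rewrite (hfU (Gq_src he)).
  + exact: R_nonedge hr he.
have gen1 : forall b, b != f -> (Y j b <= Y j u0) -> (X j.+1 b <= X j.+1 u0).
  move=> b hb hle. have hr := hfr b hb.
  case: (classic (Gq E istar q f b)) => he.
  + have y0 := hfU (Gq_src he).
    have yb : Y j b = 0 by have := cY b; lra.
    rewrite (R_0 r01 hr yb) hu0' y0. lra.
  + rewrite (R_nonedge hr he) hu0'. done.
have gen2 : forall u, in_Uq E istar q u -> (Y j u0 <= Y j u) -> (X j.+1 u0 <= X j.+1 u).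
  move=> u hu hle. case: (u =P f) => [eu|/eqP nu].
  + rewrite eu hf0 hu0'. rewrite -eu in hfU. rewrite (hfU hu). lra.
  + have hr := hfr u nu.
    case: (classic (Gq E istar q f u)) => he.
    * have y0 := hfU (Gq_src he). rewrite hu0' y0. by case: (cX1 u).
    * rewrite (R_nonedge hr he) hu0'. done.
have hnF : forall j1, (a <= j1 < j)%N -> fi j1 != f.
  move=> j1 h1. apply/eqP => e.
  have := i3 j1 h1. rewrite -/j e => h.
  have : (Y j f <= Y j u0) by rewrite !hY; lra.
  lra.
have ej : (a + n.+1 = j.+1)%N by rewrite /j; lia.
rewrite /inv1 ej. split; [|split; [|split]].
- move=> j1 h1. case: (j1 =P j) => [->|ne] //. apply: i1. rewrite -/j. lia.
- move=> j1 j2 h1 h2 e.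
  case: (j1 =P j) => [e1|n1]; case: (j2 =P j) => [e2|n2].
  + by rewrite e1 e2.
  + subst j1. exfalso. have := hnF j2 ltac:(lia). by rewrite -e eqxx.
  + subst j2. exfalso. have := hnF j1 ltac:(lia). by rewrite e eqxx.
  + apply: i2 => //; rewrite -/j; lia.
- move=> j1 h1. case: (j1 =P j) => [->|ne].
  + rewrite -/f hf0 hu0'. by case: (cY u0).
  + apply: gen1; first by apply: hnF; lia.
    have := i3 j1 ltac:(rewrite -/j; lia). rewrite -/j !hY. lra.
- move=> u hu. apply: gen2 => //. have := i4 u hu. rewrite -/j !hY. lra.
Qed.

Lemma inv1_all n : (a + n <= K)%N -> (forall j, (a <= j < a + n)%N -> (Y j u0 < 1)) -> inv1 n.
Proof.
elim: n => [|n IH] hn hy.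
- rewrite /inv1 addn0. split; [|split; [|split]] => //; try (move=> *; lia).
- apply: inv1_step; first lia.
  + apply: IH; first lia. move=> j hj; apply: hy; lia.
  + apply: hy; lia.
Qed.

Lemma P1 : exists js, (a <= js)%N /\ (js + N <= K)%N /\
  forall u, in_Uq E istar q u -> Y js u = 1.
Proof.
pose P n := forall j, (a <= j < a + n)%N -> (Y j u0 < 1).
have hPN : ~ P N.
  move=> hP. have Np := Npos.
  have [i1 [i2 _]] := inv1_all (n := N) ltac:(lia) hP.
  have := pigeon i1 i2. lia.
have hP0 : P 0%N by move=> j hj; lia.
case: (find_switch hP0 hPN) => n [hn [hPn hPn1]].
have Np := Npos.
have hy : Y (a + n)%N u0 = 1.
  case: (Hcube (a + n)%N ltac:(lia)) => _ cY.
  apply: Rle_antisym; first by case: (cY u0).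
  apply: Rnot_lt_le => hlt. apply: hPn1 => j hj.
  case: (j =P (a + n)%N) => [->|ne] //. apply: hPn. lia.
have [_ [_ [_ i4]]] := inv1_all (n := n) ltac:(lia) hPn.
exists (a + n)%N; split; [lia|split; [lia|]].
move=> u hu. case: (Hflow (a + n)%N ltac:(lia)) => d [hd hY].
case: (Hcube (a + n)%N ltac:(lia)) => _ cY.
apply: Rle_antisym; first by case: (cY u).
have := i4 u hu. move: hy. rewrite !hY. lra.
Qed.
End P1.

Lemma exists_u0 : exists u0, in_Uq E istar q u0 /\
  forall u, in_Uq E istar q u -> (X a u0 <= X a u).
Proof.
have ha : (a <= a <= K)%N by have := Npos; lia.
case: (HA a ha) => [[_ [heq|h01]] _].
- exists istar; split; first exact: istar_Uq.
  move=> u hu. rewrite (heq istar u (istar_Uq E istar q) hu). lra.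
- case: (classic (exists u0, in_Uq E istar q u0 /\ X a u0 = 0)) => [[u0 [hu h0]]|hn].
  + exists u0; split => // u hu'. rewrite h0. case: (Hcube a ha) => c _. by case: (c u).
  + exists istar; split; first exact: istar_Uq.
    have h1 : forall u, in_Uq E istar q u -> X a u = 1.
      move=> u hu. case: (h01 u hu) => // e. exfalso; apply: hn. by exists u.
    move=> u hu. rewrite (h1 u hu) (h1 istar (istar_Uq E istar q)). lra.
Qed.

Section P2.
Variable js : nat.
Hypothesis hjs1 : (a <= js)%N.
Hypothesis hjs2 : (js + N <= K)%N.
Hypothesis hjs3 : forall u, in_Uq E istar q u -> Y js u = 1.

Definition fired j b := exists j1, (js <= j1 < j)%N /\ fi j1 = b.

Definition inv2 n :=
  (forall j1 j2, (js <= j1 < js + n)%N -> (js <= j2 < js + n)%N -> fi j1 = fi j2 -> j1 = j2) /\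
  (forall b, fired (js + n) b -> Y (js + n)%N b = 0) /\
  (forall v, in_Vq E istar q v -> ~ fired (js + n) v -> Y (js + n)%N v = 1) /\
  (forall u, in_Uq E istar q u -> Y (js + n)%N u = 0 \/ Y (js + n)%N u = 1) /\
  (forall b v, in_Vq E istar q v -> E v b -> fired (js + n) v ->
     Y (js + n)%N b = 0 \/ Y (js + n)%N b = 1).

Lemma P2_step n : (js + n < K)%N -> inv2 n ->
  (exists v, in_Vq E istar q v /\ ~ fired (js + n) v) ->
  Goal \/ (inv2 n.+1 /\ exists v, in_Vq E istar q v /\ ~ fired (js + n.+1) v).
Proof.
move=> hn [i1 [i2 [i3 [i4 i5]]]] _.
have hj : (a <= js + n < K)%N by lia.
move: i1 i2 i3 i4 i5 hj. set j := (js + n)%N => i1 i2 i3 i4 i5 hj.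
case: (fi_spec hj) => hf1 [hf0 hfr].
set f := fi j in hf1 hf0 hfr.
have hfnf : ~ fired j f by move=> h; have := i2 f h; lra.
have fS : forall b, fired j.+1 b <-> b = f \/ fired j b.
  move=> b; split.
  - move=> [j1 [h1 e]]. case: (j1 =P j) => [ej|nj].
    + left; by rewrite -e ej.
    + right; exists j1; split => //. lia.
  - move=> [->|[j1 [h1 e]]].
    + exists j; split => //. rewrite /j; lia.
    + exists j1; split => //. lia.
have Xfired : forall b, fired j.+1 b -> X j.+1 b = 0.
  move=> b /fS [->|hb] //. case: (b =P f) => [->|/eqP nb] //.
  exact (@R_0 N r r01 _ _ _ _ _ (hfr b nb) (i2 b hb)).
have X01U : forall u, in_Uq E istar q u -> X j.+1 u = 0 \/ X j.+1 u = 1.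
  move=> u hu. case: (u =P f) => [->|/eqP nu]; first by left.
  exact (@R_01 N r r01 _ _ _ _ _ (hfr u nu) (i4 u hu)).
have X01N : forall b v, in_Vq E istar q v -> E v b -> fired j.+1 v ->
    X j.+1 b = 0 \/ X j.+1 b = 1.
  move=> b v hv he hfv. case: (b =P f) => [->|/eqP nb]; first by left.
  case/fS: hfv => [ev|hfv].
  - subst v. apply: (R_edge01 (hfr b nb)). by split.
  - exact (@R_01 N r r01 _ _ _ _ _ (hfr b nb) (i5 b v hv he hfv)).
have Xunf : forall v, in_Vq E istar q v -> ~ fired j.+1 v -> X j.+1 v = 1.
  move=> v hv hnf.
  have nv : v != f by apply/eqP => e; apply: hnf; apply/fS; left.
  have hnf' : ~ fired j v by move=> h; apply: hnf; apply/fS; right.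
  exact (@R_1 N r r01 _ _ _ _ _ (hfr v nv) (i3 v hv hnf')).
have ej : (js + n.+1 = j.+1)%N by rewrite /j; lia.
rewrite ej.
case: (classic (exists v, in_Vq E istar q v /\ ~ fired j.+1 v)) => [[v [hv hnf]]|hall].
- right.
  case: (Hflow j.+1 ltac:(lia)) => d [hd hY].
  case: (Hcube j.+1 ltac:(lia)) => _ cY.
  have d0 : d = 0.
    have := cY v. rewrite hY (Xunf v hv hnf). lra.
  have YX : forall b, Y j.+1 b = X j.+1 b by move=> b; rewrite hY d0 Rplus_0_r.
  split; last by exists v.
  rewrite /inv2 ej. split; [|split; [|split; [|split]]].
  + move=> j1 j2 h1 h2 e.
    have nF : forall j3, (js <= j3 < j)%N -> fi j3 != f.
      move=> j3 h3; apply/eqP => e3; apply: hfnf; by exists j3.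
    case: (j1 =P j) => [e1|n1]; case: (j2 =P j) => [e2|n2].
    * by rewrite e1 e2.
    * subst j1. exfalso. have := nF j2 ltac:(lia). by rewrite -e eqxx.
    * subst j2. exfalso. have := nF j1 ltac:(lia). by rewrite e eqxx.
    * apply: i1 => //; rewrite -/j; lia.
  + move=> b hb; rewrite YX; exact: Xfired.
  + move=> w hw hnw; rewrite YX; exact: Xunf.
  + move=> u hu; rewrite YX; exact: X01U.
  + move=> b w hw he hfw; rewrite YX; exact: X01N he hfw.
- left. exists j.+1; split; first lia.
  left. split; first by case: (Hcube j.+1 ltac:(lia)).
  right => b hb. case: (U_succ hb) => [hbU|hbV]; first exact: X01U.
  case: (pred_V hbV) => v [hv he].
  apply: (X01N b v hv he). apply: NNPP => hnf. apply: hall. by exists v.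
Qed.

Lemma P2_all n : (n <= N)%N -> Goal \/ (inv2 n /\ exists v, in_Vq E istar q v /\ ~ fired (js + n) v).
Proof.
elim: n => [|n IH] hn.
- case: (classic (exists v, in_Vq E istar q v)) => [[v hv]|hno].
  + right. have nf : forall b, ~ fired (js + 0) b by move=> b [j1 [h1 _]]; lia.
    split; last by exists v; split => //; apply: nf.
    rewrite /inv2 addn0. split; [|split; [|split; [|split]]].
    * move=> *; lia.
    * move=> b hb; exfalso; apply: (nf b); by rewrite addn0.
    * move=> w hw _. apply: hjs3. exact: Vq_Uq.
    * move=> u hu; right; exact: hjs3.
    * move=> b w _ _ hfw; exfalso; apply: (nf w); by rewrite addn0.
  + left. exists js; split; first lia.
    right. split; first by case: (Hcube js ltac:(lia)).
    right => b hb. case: (U_succ hb) => [hbU|hbV]; first by right; exact: hjs3.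
    case: (pred_V hbV) => v [hv _]. exfalso; apply: hno; by exists v.
- case: (IH ltac:(lia)) => [hG|[hi hv]]; first by left.
  apply: (P2_step (n := n)) => //. lia.
Qed.

Lemma P2 : Goal.
Proof.
case: (P2_all (leqnn N)) => // [[[i1 [i2 _]] [v [hv hnf]]]].
exfalso.
have hne : forall j, (js <= j < js + N)%N -> fi j != v.
  move=> j hj; apply/eqP => e; apply: hnf; by exists j.
have := pigeon hne i1. lia.
Qed.
End P2.

Lemma core : Goal.
Proof.
case: exists_u0 => u0 [hu hmin].
case: (P1 hu hmin) => js [h1 [h2 h3]].
exact: (P2 h1 h2 h3).
Qed.
End Core.

Lemma Aq_mono (N : nat) (E : rel 'I_N) istar m (x : 'I_N -> R) :
  in_Aq E istar m.+1 x -> in_Aq E istar m x.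
Proof.
move=> [c [heq|h01]]; split => //.
- left => a b ha hb. apply: heq; apply: (Uq_mono (m := m)) => //.
- right => a ha. apply: h01; apply: (Uq_mono (m := m)) => //.
Qed.

Section Main.
Variables (N : nat) (E : rel 'I_N) (T : R) (r : 'I_N -> R)
    (istar : 'I_N) (xi : nat -> 'I_N -> 'I_N -> Prop) (k0 qs : nat)
    (dom : R -> nat -> Prop) (tau : R -> nat -> 'I_N -> R)
    (lam : R -> nat -> nat) (tq : nat -> R).
Hypothesis Hroot : is_root E istar.
Hypothesis Tpos : 0 < T.
Hypothesis r01 : forall i, 0 < r i < 1.
Hypothesis Hmax : is_max_dist E istar qs.
Hypothesis Hsync : sync_at E istar qs (lstar r) xi k0.
Hypothesis Hsol : is_solution T r xi dom tau lam.
Hypothesis lam0 : lam 0 O = O.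
Hypothesis Htq : forall q, (q <= qs)%N -> is_min_time dom (k0 + q * lstar r)%N (tq q).

Local Notation ls := (lstar r).
Local Notation kq q := (k0 + q * lstar r)%N.

Lemma lsN : (2 * N <= ls)%N.
Proof. exact: ls_ge2N istar r01. Qed.

Lemma Npos' : (0 < N)%N.
Proof. case: istar => m hm. lia. Qed.

Lemma kS q : kq q.+1 = (kq q + ls)%N.
Proof. rewrite mulSn. lia. Qed.

Lemma stage_iff q l : (q < qs)%N -> (kq q <= l < kq q + ls)%N ->
  forall a b, xi l a b <-> Gq E istar q a b.
Proof.
move=> hq hl a b.
have -> : l = (k0 + q * ls + (l - kq q))%N by lia.
apply: Hsync => //. lia.
Qed.

Lemma cond_stage m q l : (q < qs)%N -> (q <= m)%N -> (kq q <= l < kq q + ls)%N ->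
  Cond E istar xi m l.
Proof.
move=> hq hm hl a b hab _.
have := proj1 (stage_iff hq hl a b) hab => [[_ hv]].
apply: (Uq_mono (m := q)) => //. exact: Vq_Uq.
Qed.

Lemma cond_two q m l : (q.+1 < qs)%N -> (q.+1 <= m)%N -> (kq q < l)%N -> (l < kq q.+2)%N ->
  Cond E istar xi m l.
Proof.
move=> hq hm h1 h2.
have e1 := kS q. have e2 := kS q.+1.
case: (ltnP l (kq q.+1)) => hl.
- apply: (cond_stage (q := q)); lia.
- apply: (cond_stage (q := q.+1)); lia.
Qed.

Definition witness q t' k' :=
  dom t' k' /\ (tq q <= t' /\ (kq q <= k')%N) /\
  (t' <= tq q.+1 /\ (k' <= kq q.+1 - 1)%N) /\ in_Aq E istar q.+1 (tau t' k').

Lemma window q : (q < qs)%N ->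
  (forall s j, dom s j -> tq q <= s -> (kq q <= j)%N -> (j <= kq q.+1 - 1)%N ->
     in_Aq E istar q (tau s j)) ->
  exists t' k', witness q t' k'.
Proof.
move=> hq HAq.
have [hdq hminq] := Htq (q := q) ltac:(lia).
have [hdq1 hminq1] := Htq (q := q.+1) ltac:(lia).
case: (trunc_ex Hsol lam0 hdq1) => t htr.
have eK := kS q. have hL := lsN. have Np := Npos'.
set a := kq q in eK *.
set K := (kq q.+1 - 1)%N.
have hKJ : (K < kq q.+1)%N by rewrite /K; lia.
have hKa : K = (a + ls - 1)%N by rewrite /K eK.
have hdom : forall j s, (j <= K)%N -> t j <= s <= t j.+1 -> dom s j.
  move=> j s hj hs. apply: (tr_dom htr) => //. lia.
have hJ : forall j, (j <= K)%N -> (j <= k0 + q.+1 * lstar r)%N.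
  move=> j hj. lia.
have hta : tq q <= t a.
  apply: hminq; first by apply: (tr_nonneg lam0 htr); lia.
  apply: (hdom a) => //. lia. have := tr_step htr (j := a) (hJ a ltac:(lia)). lra.
have hst : forall j, (j <= K)%N -> t j <= t j.+1 by move=> j hj; exact (tr_step htr (hJ j hj)).
have hmono : forall j, (a <= j)%N -> (j <= K)%N -> t a <= t j.
  move=> j h1 h2. apply: (tr_mono lam0 htr) => //. have := hJ j h2. lia.
have := @core N E istar r q (fun j => tau (t j) j) (fun j => tau (t j.+1) j) a K r01
  ltac:(lia).
case.
- move=> j hj. exists ((t j.+1 - t j) / T). split.
  + have := hst j ltac:(lia). move=> h. apply Rmult_le_pos; [lra| apply Rlt_le, Rinv_0_lt_compat; lra].
  + move=> b. rewrite (flow_tr Hsol htr b (hJ j ltac:(lia))) //. have := hst j ltac:(lia). lra.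
- move=> j hj. have hs := hst j ltac:(lia). split.
  + apply: (cube_tr Tpos Hsol lam0 htr (hJ j ltac:(lia))). lra.
  + apply: (cube_tr Tpos Hsol lam0 htr (hJ j ltac:(lia))). lra.
- move=> j hj.
  have hj' : (j < k0 + q.+1 * lstar r)%N by lia.
  case: (jump_tr Hsol lam0 htr hj') => _ [_ [f [h1 [h2 h3]]]].
  exists f; split => //; split => // b hb.
  apply: (R_iff _ (h3 b hb)). apply: stage_iff => //. lia.
- move=> j hj. have hs := hst j ltac:(lia). have hm := hmono j ltac:(lia) ltac:(lia). split.
  + apply: HAq; [apply: (hdom j); [lia|lra] | lra | lia | lia].
  + apply: HAq; [apply: (hdom j); [lia|lra] | lra | lia | lia].
- move=> j [hj [hX|hY]].
  + exists (t j), j. have hs := hst j ltac:(lia). have hm := hmono j ltac:(lia) ltac:(lia).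
    split; first by apply: (hdom j); [lia|lra].
    split; first by split; [lra|lia].
    split => //. split; last lia.
    apply: (tr_le htr (hJ j ltac:(lia))). lra.
  + exists (t j.+1), j. have hs := hst j ltac:(lia). have hm := hmono j ltac:(lia) ltac:(lia).
    split; first by apply: (hdom j); [lia|lra].
    split; first by split; [lra|lia].
    split => //. split; last lia.
    apply: (tr_le htr (hJ j ltac:(lia))). lra.
Qed.

Lemma claimW q : (q < qs)%N -> exists t' k', witness q t' k'.
Proof.
elim: q => [|q IH] hq.
- apply: window => // s j hd _ _ _.
  split; first exact: (cube_dom Tpos Hsol lam0 hd).
  left => a b ha hb. by rewrite (U0_istar ha) (U0_istar hb).
- case: (IH ltac:(lia)) => t' [k' [hd [[h1 h2] [[h3 h4] hA]]]].
  apply: window => // s j hds hs hj1 hj2.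
  have e1 := kS q. have e2 := kS q.+1. have hL := lsN. have Np := Npos'.
  apply: (Am_inv Tpos r01 Hsol lam0 (t := t') (k := k')) => //.
  + lra.
  + lia.
  + move=> l hl1 hl2. apply: (cond_two (q := q)); lia.
Qed.

Lemma claimD n : forall q, (q + n = qs - 1)%N -> (q < qs)%N -> forall t' k',
  witness q t' k' -> forall t k, dom t k -> t' <= t -> (k' <= k)%N ->
  in_Aq E istar q.+1 (tau t k).
Proof.
elim: n => [|n IH] q hqn hq t' k' [hd [[h1 h2] [[h3 h4] hA]]] t k hdk htt hkk.
- apply: (Am_inv Tpos r01 Hsol lam0 (t := t') (k := k')) => // l _ _ a b _ _.
  have -> : q.+1 = qs by lia.
  exact: all_Uqs Hroot Hmax.
- have e1 := kS q. have e2 := kS q.+1. have hL := lsN. have Np := Npos'.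
  case: (claimW (q := q.+1) ltac:(lia)) => t'' [k'' hw'].
  have hw := hw'. case: hw' => [hd' [[h1' h2'] [[h3' h4'] hA']]].
  case: (leqP (kq q.+2) k) => hk.
  + apply: Aq_mono.
    have [hdq2 hminq2] := Htq (q := q.+2) ltac:(lia).
    case: (dom_lower Hsol lam0 hdk hk) => s' [hs' hds'].
    have := hminq2 s' ltac:(lra) hds'. move=> hle.
    apply: (IH q.+1 ltac:(lia) ltac:(lia) t'' k'' hw) => //; first lra. lia.
  + apply: (Am_inv Tpos r01 Hsol lam0 (t := t') (k := k')) => // l hl1 hl2.
    apply: (cond_two (q := q)); lia.
Qed.
End Main.

Theorem proposition1 (N : nat) (E : rel 'I_N) (T : R) (r : 'I_N -> R)
    (istar : 'I_N) (xi : nat -> 'I_N -> 'I_N -> Prop) (k0 qs : nat)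
    (dom : R -> nat -> Prop) (tau : R -> nat -> 'I_N -> R)
    (lam : R -> nat -> nat) (tq : nat -> R) :
  irreflexive E ->
  is_root E istar ->
  0 < T ->
  (forall i, 0 < r i < 1) ->
  in_Xi E xi ->
  is_max_dist E istar qs ->
  (1 <= k0)%nat ->
  sync_at E istar qs (lstar r) xi k0 ->
  is_maximal_solution T r xi dom tau lam ->
  lam 0 O = O ->
  in_unit_cube (tau 0 O) ->
  (forall q, (q <= qs)%nat -> is_min_time dom (k0 + q * lstar r)%nat (tq q)) ->
  forall q, (q < qs)%nat ->
    exists t' k',
      dom t' k' /\
      (tq q <= t' /\ (k0 + q * lstar r <= k')%nat) /\
      (t' <= tq q.+1 /\ (k' <= k0 + q.+1 * lstar r - 1)%nat) /\
      in_Aq E istar q.+1 (tau t' k') /\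
      (forall t k, dom t k -> t' <= t -> (k' <= k)%nat ->
         in_Aq E istar q.+1 (tau t k)).
Proof.
move=> _ Hroot Tpos r01 _ Hmax _ Hsync [Hsol _] lam0 _ Htq q hq.
case: (claimW Tpos r01 Hsync Hsol lam0 Htq hq) => t' [k' hw].
exists t', k'. have hw' := hw. case: hw' => [hd [hb1 [hb2 hA]]].
split => //; split => //; split => //; split => //.
move=> t k hdk htt hkk.
apply: (claimD Hroot Tpos r01 Hmax Hsync Hsol lam0 Htq (n := (qs - 1 - q)%N) (q := q) _ hq hw) => //.
lia.
Qed.
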